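(* Let $A=H+S\in\mathbb{C}^{n,n}$, where $H=H^*$ is positive semidefinite with $H\neq 0$, and $S=-S^*$ with $S\neq 0$. Then there exist a unitary matrix $U\in\mathbb{C}^{n,n}$, an integer $r\geq 2$, and integers $n_1\geq n_2\geq\cdots\geq n_{r-1}>0$ and $n_r\geq 0$ with $n_1+\cdots+n_r=n$, such that, partitioning conformally with the block sizes $n_1,\dots,n_r$, $$U^*HU=\begin{bmatrix} H_{11} & 0\\ 0 & 0\end{bmatrix},\qquad U^*SU=\begin{bmatrix} S_{11} & S_{12} & & & 0\\ S_{21} & S_{22} & \ddots & & 0\\ & \ddots & \ddots & S_{r-2,r-1} & \vdots\\ & & S_{r-1,r-2} & S_{r-1,r-1} & 0\\ 0 & \cdots & \cdots & 0 & S_{r,r}\end{bmatrix},$$ that is, $U^*SU=[S_{ij}]_{i,j=1}^r$ with $S_{ij}\in\mathbb{C}^{n_i,n_j}$, $S_{ij}=0$ whenever $|i-j|>1$, and $S_{i,r}=0$, $S_{r,i}=0$ for all $i<r$; where $H_{11}=H_{11}^*\in\mathbb{C}^{n_1,n_1}$ is positive definite, $S_{ii}=-S_{ii}^*\in\mathbb{C}^{n_i,n_i}$ for $i=1,\dots,r$, and $S_{i,i-1}=-S_{i-1,i}^*=[\Sigma_{i,i-1}\;\,0]\in\mathbb{C}^{n_i,n_{i-1}}$ with $\Sigma_{i,i-1}\in\mathbb{C}^{n_i,n_i}$ nonsingular for $i=2,\dots,r-1$.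
   Context: $M^*$ denotes the conjugate transpose of $M$. A block of size $0$ is understood to be absent. *)

(* Defs.v *)
From mathcomp Require Import all_boot all_order all_algebra.
From mathcomp Require Export sesquilinear spectral.
Set Implicit Arguments. Unset Strict Implicit. Unset Printing Implicit Defensive.
Import Order.TTheory GRing.Theory Num.Theory.
Local Open Scope ring_scope.
Local Open Scope sesquilinear_scope.

Definition ctr {C : numClosedFieldType} m n (M : 'M[C]_(m, n)) : 'M[C]_(n, m) :=
  M ^t*.

Definition hermmx {C : numClosedFieldType} n (M : 'M[C]_n) : Prop :=
  ctr M = M.
Definition skewhermmx {C : numClosedFieldType} n (M : 'M[C]_n) : Prop :=
  ctr M = - M.

Definition psdmx {C : numClosedFieldType} n (M : 'M[C]_n) : Prop :=
  hermmx M /\ forall x : 'cV[C]_n, 0 <= (ctr x *m M *m x) 0 0.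
Definition pdmx {C : numClosedFieldType} n (M : 'M[C]_n) : Prop :=
  hermmx M /\ forall x : 'cV[C]_n, x != 0 -> 0 < (ctr x *m M *m x) 0 0.

Definition blk {C : numClosedFieldType} n r (nb : 'I_r -> nat)
  (hs : (\sum_(i < r) nb i)%N = n) (M : 'M[C]_n) (i j : 'I_r) : 'M[C]_(nb i, nb j) :=
  @submxblock C r r nb nb (castmx (esym hs, esym hs) M) i j.

(* Main.v *)
Require Import Defs.
From mathcomp Require Import all_boot all_order all_algebra.
From mathcomp Require Import sesquilinear spectral.
From mathcomp Require Import zify ring.
Import Order.TTheory GRing.Theory Num.Theory Num.Def.
Local Open Scope ring_scope.
Set Implicit Arguments. Unset Strict Implicit. Unset Printing Implicit Defensive.


Section Basics.
Variable C : numClosedFieldType.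

Lemma ctrE m n (M : 'M[C]_(m, n)) : ctr M = map_mx conjC M^T.
Proof. by []. Qed.

Lemma ctrK m n (M : 'M[C]_(m, n)) : ctr (ctr M) = M.
Proof. exact: trmxCK. Qed.

Lemma ctrM m n p (A : 'M[C]_(m, n)) (B : 'M[C]_(n, p)) :
  ctr (A *m B) = ctr B *m ctr A.
Proof. by rewrite !ctrE trmx_mul map_mxM. Qed.

Lemma ctr_block m1 m2 n1 n2 (A : 'M[C]_(m1, n1)) (B : 'M[C]_(m1, n2))
  (Cc : 'M[C]_(m2, n1)) (D : 'M[C]_(m2, n2)) :
  ctr (block_mx A B Cc D) = block_mx (ctr A) (ctr Cc) (ctr B) (ctr D).
Proof. by rewrite !ctrE tr_block_mx map_block_mx. Qed.

Lemma ctr0 m n : ctr (0 : 'M[C]_(m, n)) = 0.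
Proof. by rewrite ctrE trmx0 map_mx0. Qed.

Lemma ctrN m n (A : 'M[C]_(m, n)) : ctr (- A) = - ctr A.
Proof. by rewrite ctrE linearN /= map_mxN. Qed.

Lemma ctr1 n : ctr (1%:M : 'M[C]_n) = 1%:M.
Proof. by rewrite ctrE trmx1 map_mx1. Qed.

Lemma ctr_entry m n (A : 'M[C]_(m, n)) i j : ctr A i j = (A j i)^*.
Proof. by rewrite !mxE. Qed.

Lemma unitaryE m n (U : 'M[C]_(m, n)) : (U \is unitarymx) = (U *m ctr U == 1%:M).
Proof. by []. Qed.

Lemma unitary_l n (U : 'M[C]_n) : U \is unitarymx -> ctr U *m U = 1%:M.
Proof.
move=> uU; rewrite ctrE -(invmx_unitary uU) mulVmx //; exact: unitarymx_unit.
Qed.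

Lemma unitary_r m n (U : 'M[C]_(m, n)) : U \is unitarymx -> U *m ctr U = 1%:M.
Proof. by move/unitarymxP. Qed.

Lemma unitary_ctr n (U : 'M[C]_n) : U \is unitarymx -> ctr U \is unitarymx.
Proof. by move=> uU; rewrite unitaryE ctrK unitary_l. Qed.

Lemma unitary_mul n (U V : 'M[C]_n) :
  U \is unitarymx -> V \is unitarymx -> U *m V \is unitarymx.
Proof.
move=> uU uV; rewrite unitaryE ctrM mulmxA -(mulmxA U) unitary_r // mulmx1.
by rewrite unitary_r.
Qed.

Lemma unitary_block m n (Q : 'M[C]_m) (W : 'M[C]_n) :
  Q \is unitarymx -> W \is unitarymx -> block_mx Q 0 0 W \is unitarymx.
Proof.
move=> uQ uW; rewrite unitaryE ctr_block !ctr0 mulmx_block.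
rewrite !mulmx0 !mul0mx !addr0 !add0r !unitary_r //.
by rewrite -scalar_mx_block.
Qed.

Lemma unitary1 n : (1%:M : 'M[C]_n) \is unitarymx.
Proof. by rewrite unitaryE ctr1 mulmx1. Qed.

Lemma unitary_cast m n m' n' (e : (m = m') * (n = n')) (U : 'M[C]_(m, n)) :
  U \is unitarymx -> castmx e U \is unitarymx.
Proof. by case: e => e1 e2; case: m' / e1; case: n' / e2; rewrite castmx_id. Qed.

Lemma ctr_cast m n m' n' (e1 : m = m') (e2 : n = n') (U : 'M[C]_(m, n)) :
  ctr (castmx (e1, e2) U) = castmx (e2, e1) (ctr U).
Proof. by case: m' / e1; case: n' / e2; rewrite !castmx_id. Qed.

Lemma cast_mul m n p m' n' p' (e1 : m = m') (e2 : n = n') (e3 : p = p')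
  (A : 'M[C]_(m, n)) (B : 'M[C]_(n, p)) :
  castmx (e1, e2) A *m castmx (e2, e3) B = castmx (e1, e3) (A *m B).
Proof. by case: m' / e1; case: n' / e2; case: p' / e3; rewrite !castmx_id. Qed.

Definition ent m n (M : 'M[C]_(m, n)) (x y : nat) : C :=
  match @insub _ (fun x => x < m)%N 'I_m x, @insub _ (fun y => y < n)%N 'I_n y with
  | Some i, Some j => M i j
  | _, _ => 0
  end.

Lemma entE m n (M : 'M[C]_(m, n)) (i : 'I_m) (j : 'I_n) : ent M i j = M i j.
Proof. by rewrite /ent !valK. Qed.

Lemma ent_out m n (M : 'M[C]_(m, n)) x y : ~~ ((x < m) && (y < n))%N -> ent M x y = 0.
Proof.
rewrite negb_and /ent => /orP[hx|hy]; first by rewrite insubN.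
by case: insub => // ?; rewrite insubN.
Qed.

Lemma ent_eq m n (M N : 'M[C]_(m, n)) : (forall x y, ent M x y = ent N x y) -> M = N.
Proof. by move=> h; apply/matrixP => i j; rewrite -!entE h. Qed.

Lemma ent_cast m n m' n' (e : (m = m') * (n = n')) (M : 'M[C]_(m, n)) x y :
  ent (castmx e M) x y = ent M x y.
Proof. by case: e => e1 e2; case: m' / e1; case: n' / e2; rewrite castmx_id. Qed.

Lemma ent0 m n x y : ent (0 : 'M[C]_(m, n)) x y = 0.
Proof.
case: (boolP ((x < m) && (y < n))%N) => [/andP[hx hy]|h]; last by rewrite ent_out.
by rewrite -[x]/(val (Ordinal hx)) -[y]/(val (Ordinal hy)) entE mxE.
Qed.

Lemma entN m n (M : 'M[C]_(m, n)) x y : ent (- M) x y = - ent M x y.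
Proof.
case: (boolP ((x < m) && (y < n))%N) => [/andP[hx hy]|h]; last by rewrite !ent_out // oppr0.
by rewrite -[x]/(val (Ordinal hx)) -[y]/(val (Ordinal hy)) !entE mxE.
Qed.

Lemma ent_ctr m n (M : 'M[C]_(m, n)) x y : ent (ctr M) x y = (ent M y x)^*.
Proof.
case: (boolP ((x < n) && (y < m))%N) => [/andP[hx hy]|h].
  by rewrite -[x]/(val (Ordinal hx)) -[y]/(val (Ordinal hy)) !entE ctr_entry.
by rewrite !ent_out ?conjC0 // andbC.
Qed.

Lemma ent_block m1 m2 n1 n2 (A : 'M[C]_(m1, n1)) (B : 'M[C]_(m1, n2))
  (Cc : 'M[C]_(m2, n1)) (D : 'M[C]_(m2, n2)) x y :
  ent (block_mx A B Cc D) x y =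
  if (x < m1)%N then (if (y < n1)%N then ent A x y else ent B x (y - n1))
  else (if (y < n1)%N then ent Cc (x - m1) y else ent D (x - m1) (y - n1)).
Proof.
case: (boolP ((x < m1 + m2) && (y < n1 + n2))%N) => [/andP[hx hy]|h]; last first.
  rewrite ent_out //; case: ifP => h1; case: ifP => h2; rewrite ent_out //;
  apply/negP => /andP[h3 h4]; move: h; rewrite negb_and => /orP[] /negP; lia.
rewrite -[ent _ x y]/(ent _ (Ordinal hx) (Ordinal hy)) entE.
have [i hi|i hi] := splitP (Ordinal hx); have [j hj|j hj] := splitP (Ordinal hy);
  rewrite /= in hi hj.
- have -> : Ordinal hx = lshift m2 i by apply: val_inj.
  have -> : Ordinal hy = lshift n2 j by apply: val_inj.
  by rewrite block_mxEul /= hi hj entE.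
- have -> : Ordinal hx = lshift m2 i by apply: val_inj.
  have -> : Ordinal hy = rshift n1 j by apply: val_inj.
  by rewrite block_mxEur /= hi hj ?ltn_ord ?ltnNge ?leq_addr /= ?addKn ?entE.
- have -> : Ordinal hx = rshift m1 i by apply: val_inj.
  have -> : Ordinal hy = lshift n2 j by apply: val_inj.
  by rewrite block_mxEdl /= hi hj ?ltn_ord ?ltnNge ?leq_addr /= ?addKn ?entE.
- have -> : Ordinal hx = rshift m1 i by apply: val_inj.
  have -> : Ordinal hy = rshift n1 j by apply: val_inj.
  by rewrite block_mxEdr /= hi hj ?ltn_ord ?ltnNge ?leq_addr /= ?addKn ?entE.
Qed.

End Basics.


Section L1.
Variable C : numClosedFieldType.
Local Notation "B ^!" :=
  (orthomx conjC (mx_of_hermitian (hermitian1mx _)) B) : matrix_set_scope.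

Lemma castL m n m' (e : m = m') (A : 'M[C]_(m, n)) p (B : 'M[C]_(n, p)) :
  castmx (e, erefl n) A *m B = castmx (e, erefl p) (A *m B).
Proof. by case: m' / e; rewrite !castmx_id. Qed.

Lemma castR m n p' p (e : p = p') (A : 'M[C]_(m, n)) (B : 'M[C]_(n, p)) :
  A *m castmx (erefl n, e) B = castmx (erefl m, e) (A *m B).
Proof. by case: p' / e; rewrite !castmx_id. Qed.

Lemma cast_block0 r p a b m k (e3 : r = p) (e1 : (p + a = m)%N) (e1' : (r + a = m)%N)
  (e2 : (p + b = k)%N) (X : 'M[C]_(r, p)) :
  castmx (e1, e2) (block_mx (castmx (e3, erefl p) X) 0 0 0 : 'M_(p + a, p + b)) =
  castmx (e1', e2) (block_mx X 0 0 0).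
Proof. by case: p / e3 e1 e2 X => e1 e2 X; rewrite castmx_id (eq_irrelevance e1 e1'). Qed.

Lemma rank_cast m n m' n' (e : (m = m') * (n = n')) (A : 'M[C]_(m, n)) :
  \rank (castmx e A) = \rank A.
Proof. by case: e => e1 e2; case: m' / e1; case: n' / e2; rewrite castmx_id. Qed.

Lemma ortho_part m n (V : 'M[C]_(m, n)) :
  schmidt (row_base (V^!)%MS) *m ctr V = 0.
Proof.
apply/orthomx1P.
by rewrite (eqmx_schmidt_free (row_base_free _)) eq_row_base.
Qed.

Lemma span_part m n (V : 'M[C]_(m, n)) :
  exists X, V = X *m schmidt (row_base V).
Proof.
apply/submxP.
by rewrite (eqmx_schmidt_free (row_base_free _)) eq_row_base.
Qed.

Lemma svd_lite m k (Cm : 'M[C]_(m, k)) :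
  exists (a b : nat) (e1 : (\rank Cm + a = m)%N) (e2 : (\rank Cm + b = k)%N)
    (P : 'M[C]_m) (Q : 'M[C]_k) (Sig : 'M[C]_(\rank Cm)),
    [/\ P \is unitarymx, Q \is unitarymx, Sig \in unitmx &
        P *m Cm *m ctr Q = castmx (e1, e2) (block_mx Sig 0 0 0)].
Proof.
set p := \rank Cm.
pose Q1 := schmidt (row_base Cm); pose Q2 := schmidt (row_base (Cm^!)%MS).
have uQ1 : Q1 \is unitarymx by apply: schmidt_unitarymx; rewrite rank_leq_col.
have hQ2 : Cm *m ctr Q2 = 0.
  by have := congr1 (@ctr _ _ _) (ortho_part Cm); rewrite ctrM ctrK ctr0.
pose F := Cm *m ctr Q1.
have CF : Cm = F *m Q1.
  have [X hX] := span_part Cm.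
  have FX : F = X.
    by rewrite /F (congr1 (mulmx^~ (ctr Q1)) hX) /= -mulmxA unitary_r // mulmx1.
  by rewrite FX.
have rF : \rank F = p.
  apply/eqP; rewrite eqn_leq rank_leq_col /p {1}CF mxrankM_maxl //.
pose P1 := schmidt (row_base (ctr F)); pose P2 := schmidt (row_base ((ctr F)^!)%MS).
have uP1 : P1 \is unitarymx by apply: schmidt_unitarymx; rewrite rank_leq_col.
have hP2 : P2 *m F = 0 by rewrite -[F in _ *m F]ctrK ortho_part.
pose Sig0 := P1 *m F.
have rS : \rank Sig0 = p.
  have [Y hY] := span_part (ctr F).
  have FG : F = ctr P1 *m ctr Y.
    by rewrite -[LHS]ctrK (congr1 (@ctr _ _ _) hY) ctrM.
  have SG : Sig0 = ctr Y.
    by rewrite /Sig0 (congr1 (mulmx P1) FG) mulmxA unitary_r // mul1mx.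
  have FE : ctr P1 *m Sig0 = F by rewrite SG -FG.
  have h := mxrankM_maxr (ctr P1) Sig0; rewrite FE rF in h.
  by apply/eqP; rewrite eqn_leq rank_leq_col h.
have e3 : \rank (ctr F) = p by rewrite ctrE mxrank_map mxrank_tr.
have em : (\rank (ctr F) + \rank ((ctr F)^!)%MS = m)%N by rewrite add_rank_ortho.
have e1 : (p + \rank ((ctr F)^!)%MS = m)%N by rewrite -e3.
have e2 : (p + \rank (Cm^!)%MS = k)%N by rewrite add_rank_ortho.
exists (\rank ((ctr F)^!)%MS), (\rank (Cm^!)%MS), e1, e2.
exists (castmx (em, erefl m) (schmidt_complete (ctr F))).
exists (castmx (e2, erefl k) (schmidt_complete Cm)).
exists (castmx (e3, erefl p) Sig0).
split.
- by apply: unitary_cast; exact: schmidt_complete_unitarymx.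
- by apply: unitary_cast; exact: schmidt_complete_unitarymx.
- by rewrite -row_free_unit /row_free rank_cast rS.
rewrite ctr_cast castL castL castR cast_block0.
congr castmx.
rewrite /schmidt_complete -/P1 -/P2 -/Q1 -/Q2.
have h1 : Cm *m ctr (col_mx Q1 Q2) = row_mx F 0.
  by rewrite ctrE tr_col_mx map_row_mx -!ctrE mul_mx_row hQ2.
rewrite -mulmxA h1 mul_mx_row mulmx0 mul_col_mx hP2 block_mxEh col_mx0.
by [].
Qed.

End L1.


Definition off (s : seq nat) b := sumn (take b s).
Definition inb (s : seq nat) (l b x : nat) := (off s b <= x < off s b + nth l s b)%N.

Section R.
Variable C : numClosedFieldType.

Definition Struct (s : seq nat) (l : nat) N (M : 'M[C]_N) : Prop :=
  [/\ (forall b c x y, (c.+1 < b)%N -> (b <= size s)%N -> inb s l b x -> inb s l c y ->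
          ent M x y = 0),
      (forall c x y, (c < size s)%N -> inb s l (size s) x -> inb s l c y -> ent M x y = 0) &
      (forall b, (b.+1 < size s)%N ->
         (forall x y, inb s l b.+1 x -> (off s b + nth l s b.+1 <= y)%N ->
            (y < off s b + nth l s b)%N -> ent M x y = 0) /\
         (\matrix_(i < nth l s b.+1, j < nth l s b.+1)
              ent M (off s b.+1 + i) (off s b + j)) \in unitmx)].

Lemma castN m n m' n' (e : (m = m') * (n = n')) (A : 'M[C]_(m, n)) :
  castmx e (- A) = - castmx e A.
Proof. by case: e => e1 e2; case: m' / e1; case: n' / e2; rewrite !castmx_id. Qed.

Lemma inb_cons k s l b x : inb (k :: s) l b.+1 x -> exists2 x', x = (k + x')%N & inb s l b x'.
Proof.
rewrite /inb /off /= => /andP[h1 h2]; exists (x - k)%N; first by lia.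
apply/andP; split; lia.
Qed.

Lemma inb0 k s l y : inb (k :: s) l 0 y -> (y < k)%N.
Proof. by rewrite /inb /off /= add0n. Qed.

Lemma inb_ge p t l b x : inb (p :: t) l b.+1 x -> (p <= x)%N.
Proof. by rewrite /inb /off /= => /andP[h _]; lia. Qed.

Lemma Rstep m : forall k (S : 'M[C]_(k + m)), (0 < k)%N -> ctr S = - S ->
  exists (Q : 'M[C]_k) (W : 'M[C]_m) (t : seq nat) (l : nat),
  [/\ Q \is unitarymx, W \is unitarymx,
      sorted geq (k :: t) && all (fun x => 0 < x)%N (k :: t), (sumn (k :: t) + l = k + m)%N &
      Struct (k :: t) l (ctr (block_mx Q 0 0 W) *m S *m block_mx Q 0 0 W)].
Proof.
elim/ltn_ind: m => m IH k S k0 skS.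
have hS := submxK S.
set A := ulsubmx S in hS; set B := ursubmx S in hS.
set Cm := dlsubmx S in hS; set D := drsubmx S in hS.
have := skS; rewrite -hS ctr_block opp_block_mx => /eq_block_mx[_ _ _ skD].
have [p0|pp] := eqVneq (\rank Cm) 0%N.
  have Cm0 : Cm = 0 by apply/eqP; rewrite -mxrank_eq0 p0.
  exists 1%:M, 1%:M, [::], m; split.
  - exact: unitary1.
  - exact: unitary1.
  - by rewrite /= k0.
  - by rewrite /= addn0.
  rewrite -scalar_mx_block ctr1 mul1mx mulmx1.
  split.
  - by move=> b c x y /= hcb hb; exfalso; lia.
  - move=> [|c] x y //= _ hx hy.
    have := inb0 hy => yk.
    have [x' -> _] := inb_cons hx.
    rewrite ent_block ltnNge leq_addr /= yk addKn Cm0 ent0 //.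
  - by move=> b /= hb; exfalso; lia.
have [a [bb [e1 [e2 [P [Q [Sig [uP uQ uSig hE]]]]]]]] := svd_lite Cm.
move: e1 e2 Sig uSig hE pp. set p := \rank Cm => e1 e2 Sig uSig hE pp.
pose D2 := castmx (esym e1, esym e1) (P *m D *m ctr P).
have skD2 : ctr D2 = - D2.
  by rewrite /D2 ctr_cast !ctrM ctrK skD mulNmx mulmxN mulmxA castN.
have ltam : (a < m)%N by lia.
have p0 : (0 < p)%N by lia.
have [Q2 [W2 [t2 [l2 [uQ2 uW2 so2 su2 St2]]]]] := IH a ltam p D2 p0 skD2.
set U2 := block_mx Q2 0 0 W2 in St2.
pose W := ctr P *m castmx (e1, e1) U2.
exists (ctr Q), W, (p :: t2), l2; split.
- exact: unitary_ctr.
- by apply: unitary_mul; [exact: unitary_ctr | apply: unitary_cast; exact: unitary_block].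
- move: so2; rewrite /= k0 => /andP[-> ->]; rewrite !andbT; lia.
- by move: su2; rewrite /= => h; lia.
set M2 := ctr U2 *m D2 *m U2 in St2.
set M := ctr _ *m _ *m _.
have hM : M = block_mx (Q *m A *m ctr Q) (Q *m B *m W) (ctr W *m Cm *m ctr Q) (ctr W *m D *m W).
  rewrite /M ctr_block !ctr0 ctrK !mulmx_block.
  by rewrite !mulmx0 !mul0mx !addr0 !add0r.
have hDL : ctr W *m Cm *m ctr Q = castmx (e1, e2) (block_mx (ctr Q2 *m Sig) 0 0 0).
  rewrite /W ctrM ctrK ctr_cast -!mulmxA (mulmxA P) hE cast_mul.
  by rewrite /U2 ctr_block !ctr0 mulmx_block !mulmx0 !mul0mx; congr castmx; congr block_mx; rewrite ?addr0.
have hDR : ctr W *m D *m W = castmx (e1, e1) M2.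
  rewrite /W ctrM ctrK ctr_cast.
  have -> : castmx (e1, e1) (ctr U2) *m P *m D *m (ctr P *m castmx (e1, e1) U2)
     = castmx (e1, e1) (ctr U2) *m (P *m D *m ctr P) *m castmx (e1, e1) U2.
    by rewrite !mulmxA.
  by rewrite -[P *m D *m ctr P](castmxKV e1 e1) -/D2 !cast_mul.
have F1 : forall x y, ent M (k + x) (k + y) = ent M2 x y.
  by move=> x y; rewrite hM ent_block !ltnNge !leq_addr /= !addKn hDR ent_cast.
have F2 : forall x y, (y < k)%N ->
    ent M (k + x) y = if (x < p)%N && (y < p)%N then ent (ctr Q2 *m Sig) x y else 0.
  move=> x y yk; rewrite hM ent_block ltnNge leq_addr /= yk addKn hDL ent_cast ent_block.
  by case: (x < p)%N; case: (y < p)%N; rewrite ?ent0.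
case: St2 => Z2 L2 S2.
split.
- move=> [|[|b]] c x y //= hcb hb hx hy.
  have [x' -> hx'] := inb_cons hx.
  have xp := inb_ge hx'.
  case: c hcb hy => [|c] hcb hy.
    by rewrite F2 ?(inb0 hy) // ltnNge xp.
  have [y' -> hy'] := inb_cons hy.
  by rewrite F1 (Z2 b.+1 c).
- move=> [|c] x y /= hc hx hy.
    have [x' -> hx'] := inb_cons hx.
    have xp := inb_ge hx'.
    by rewrite F2 ?(inb0 hy) // ltnNge xp.
  have [x' -> hx'] := inb_cons hx.
  have [y' -> hy'] := inb_cons hy.
  by rewrite F1 (L2 c).
move=> [|b] hb.
  split.
    move=> x y hx hy1 hy2.
    have [x' -> hx'] := inb_cons hx.
    rewrite F2; last by move: hy2; rewrite /off /=; lia.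
    have -> : (y < p)%N = false by move: hy1; rewrite /off /=; lia.
    by rewrite andbF.
  have -> : (\matrix_(i < nth l2 [:: k, p & t2] 1, j < nth l2 [:: k, p & t2] 1)
      ent M (off [:: k, p & t2] 1 + i) (off [:: k, p & t2] 0 + j)) = ctr Q2 *m Sig.
    apply/matrixP => i j; rewrite mxE /off /= addn0 add0n F2 ?ltn_ord ?entE //.
    by move: (ltn_ord j) => /= hj; lia.
  by rewrite unitmx_mul uSig andbT; apply: unitarymx_unit; exact: unitary_ctr.
have [S2a S2b] := S2 b hb.
split.
  move=> x y hx hy1 hy2.
  have [x' -> hx'] := inb_cons hx.
  move: hy1 hy2; rewrite /off /= => hy1 hy2.
  have -> : y = (k + (y - k))%N by lia.
  by rewrite F1 S2a //; rewrite /off /=; lia.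
have -> : (\matrix_(i < nth l2 [:: k, p & t2] b.+2, j < nth l2 [:: k, p & t2] b.+2)
      ent M (off [:: k, p & t2] b.+2 + i) (off [:: k, p & t2] b.+1 + j)) =
    (\matrix_(i < nth l2 (p :: t2) b.+1, j < nth l2 (p :: t2) b.+1)
      ent M2 (off (p :: t2) b.+1 + i) (off (p :: t2) b + j)).
  by apply/matrixP => i j; rewrite !mxE /off /= -!addnA F1.
exact: S2b.
Qed.

End R.


Section P4.
Variable C : numClosedFieldType.

Lemma ctrB m n (A B : 'M[C]_(m, n)) : ctr (A - B) = ctr A - ctr B.
Proof. by rewrite !ctrE linearB /= map_mxB. Qed.

Lemma ctrZ m n (a : C) (A : 'M[C]_(m, n)) : ctr (a *: A) = a^* *: ctr A.
Proof. by rewrite !ctrE linearZ /= map_mxZ. Qed.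

Lemma quad_exp n (H : 'M[C]_n) (y z : 'cV[C]_n) (e : C) : e \is Num.real ->
 ctr (y - e *: z) *m H *m (y - e *: z) = ctr y *m H *m y - e *: (ctr y *m H *m z) - e *: (ctr z *m H *m y) + (e * e) *: (ctr z *m H *m z).
Proof.
move=> re; rewrite mulmxBr. rewrite ctrB ctrZ conj_Creal // !mulmxBl.
rewrite -(scalemxAl e (ctr z) H) -(scalemxAl e (ctr z *m H) y) -(scalemxAl e (ctr z *m H) (e *: z)).
rewrite -(scalemxAr e (ctr y *m H) z) -(scalemxAr e (ctr z *m H) z) scalerA.
move: (ctr y *m H *m y) (ctr y *m H *m z) (ctr z *m H *m y) (ctr z *m H *m z) => a b c d.
apply/matrixP => i j; rewrite !mxE; ring.
Qed.

Lemma norm2_ge0 n (z : 'cV[C]_n) : 0 <= (ctr z *m z) 0 0.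
Proof.
suff -> : (ctr z *m z) 0 0 = dotmx (ctr z) (ctr z) by apply: dnorm_ge0.
by rewrite dotmxE -ctrE ctrK.
Qed.

Lemma norm2_eq0 n (z : 'cV[C]_n) : (ctr z *m z) 0 0 = 0 -> z = 0.
Proof.
move=> h; have : (dotmx (ctr z) (ctr z)) == 0.
  by rewrite dotmxE -ctrE ctrK h.
rewrite dnorm_eq0 => /eqP h2.
by rewrite -[z]ctrK h2 ctr0.
Qed.

Lemma psd_ker n (H : 'M[C]_n) (y : 'cV[C]_n) :
  psdmx H -> (ctr y *m H *m y) 0 0 = 0 -> H *m y = 0.
Proof.
move=> [hH psd] hy; set z := H *m y.
set N := (ctr z *m z) 0 0; set K := (ctr z *m H *m z) 0 0.
have N0 : 0 <= N by exact: norm2_ge0.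
have K0 : 0 <= K by exact: psd.
have hyz : ctr y *m H *m z = ctr z *m z.
  by rewrite /z -{1}hH -ctrM.
have hzy : ctr z *m H *m y = ctr z *m z by rewrite -mulmxA.
have quad : forall eps : C, eps \is Num.real ->
    (ctr (y - eps *: z) *m H *m (y - eps *: z)) 0 0 = eps ^+ 2 * K - 2 * eps * N.
  move=> eps re.
  rewrite quad_exp // hyz hzy; move: hy; rewrite /N /K.
  move: (ctr y *m H *m y) (ctr z *m z) (ctr z *m H *m z) => a b c ha.
  by rewrite !mxE ha; ring.
have hK1 : K + 1 != 0 by rewrite lt0r_neq0 // ltr_wpDl.
pose eps := N / (K + 1).
have reps : eps \is Num.real by apply: ger0_real; rewrite divr_ge0 // addr_ge0.
have := psd (y - eps *: z); rewrite quad //.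
have -> : eps ^+ 2 * K - 2 * eps * N = - (N ^+ 2 * ((K + 2) / (K + 1) ^+ 2)).
  by rewrite /eps; field.
rewrite oppr_ge0 => hle.
apply: norm2_eq0; apply/eqP; rewrite -/N.
apply: contraTT hle => hN.
have Np : 0 < N by rewrite lt_def hN N0.
rewrite lt_geF // mulr_gt0 ?exprn_gt0 // divr_gt0 ?exprn_gt0 ?ltr_wpDl //.
Qed.

End P4.


Section P5.
Variable C : numClosedFieldType.
Local Notation "B ^!" :=
  (orthomx conjC (mx_of_hermitian (hermitian1mx _)) B) : matrix_set_scope.

Lemma blkE n r (nb : 'I_r -> nat) (hs : (\sum_(i < r) nb i)%N = n) (M : 'M[C]_n)
  i j (a : 'I_(nb i)) (b : 'I_(nb j)) :
  blk hs M i j a b =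
  ent M (\sum_(q < r | (q < i)%N) nb q + a)%N (\sum_(q < r | (q < j)%N) nb q + b)%N.
Proof.
by rewrite /blk /submxblock /mxsub mxE -entE ent_cast !tagnat.RankEsum.
Qed.

Lemma sum_take (s : seq nat) l i : (i <= size s)%N ->
  (\sum_(q < i) nth l s q)%N = sumn (take i s).
Proof.
elim: s i => [|x s IH] [|i] //= hi; rewrite ?big_ord0 // big_ord_recl /= IH //.
Qed.

Lemma sum_off (s : seq nat) l (i : 'I_(size s).+1) :
  (\sum_(q < (size s).+1 | (q < i)%N) nth l s q)%N = off s i.
Proof.
rewrite -(big_ord_widen _ (fun q => nth l s q)) ?sum_take //; first by rewrite -ltnS.
exact: ltnW.
Qed.

Lemma sum_all (s : seq nat) l : (\sum_(q < (size s).+1) nth l s q)%N = (sumn s + l)%N.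
Proof.
rewrite big_ord_recr /= sum_take // take_size nth_default //.
Qed.

Lemma blk_off n (s : seq nat) l (hs : (\sum_(i < (size s).+1) nth l s i)%N = n)
  (M : 'M[C]_n) (i j : 'I_(size s).+1) a b :
  @blk C n (size s).+1 (fun i => nth l s i) hs M i j a b =
  ent M (off s i + a) (off s j + b).
Proof. by rewrite blkE !sum_off. Qed.

Lemma inb_blk (s : seq nat) l (i : 'I_(size s).+1) (a : 'I_(nth l s i)) :
  inb s l i (off s i + a).
Proof. by rewrite /inb leq_addr ltn_add2l ltn_ord. Qed.

Lemma skew_ent N (M : 'M[C]_N) x y : ctr M = - M -> ent M x y = - (ent M y x)^*.
Proof. by move=> h; rewrite -ent_ctr h entN opprK. Qed.

Lemma conj_cast N n (e : N = n) (A : 'M[C]_N) (X : 'M[C]_n) :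
  ctr (castmx (e, e) A) *m X *m castmx (e, e) A =
  castmx (e, e) (ctr A *m castmx (esym e, esym e) X *m A).
Proof. by case: n / e X => X; rewrite !castmx_id. Qed.

Lemma pd_conj k (D Q : 'M[C]_k) : pdmx D -> Q \is unitarymx ->
  pdmx (ctr Q *m D *m Q).
Proof.
move=> [hD pD] uQ; split.
  by rewrite /hermmx !ctrM ctrK hD mulmxA.
move=> x x0.
have -> : ctr x *m (ctr Q *m D *m Q) *m x = ctr (Q *m x) *m D *m (Q *m x).
  by rewrite ctrM !mulmxA.
apply: pD; apply: contra x0 => /eqP h.
by rewrite -[x]mul1mx -(unitary_l uQ) -mulmxA h mulmx0.
Qed.

Lemma off_ge k t (i : nat) : (0 < i)%N -> (k <= off (k :: t) i)%N.
Proof. by case: i => // i _; rewrite /off /= leq_addr. Qed.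

Lemma pd_restrict n k (H : 'M[C]_n) (V1 : 'M[C]_(k, n)) :
  psdmx H -> V1 \is unitarymx -> (V1 <= H)%MS -> pdmx (V1 *m H *m ctr V1).
Proof.
move=> psdH uV sVH; have [hH pH] := psdH; split.
  by rewrite /hermmx !ctrM ctrK hH mulmxA.
move=> x x0; set y := ctr V1 *m x.
have -> : ctr x *m (V1 *m H *m ctr V1) *m x = ctr y *m H *m y.
  by rewrite /y ctrM ctrK !mulmxA.
rewrite lt_def pH andbT; apply: contra x0 => /eqP hy0.
have Hy := psd_ker psdH hy0.
have hyH : ctr y *m ctr H = 0 by rewrite -ctrM Hy ctr0.
have s1 : (ctr y <= H^!)%MS by apply/orthomx1P.
have s2 : (ctr y <= H)%MS.
  by rewrite /y ctrM ctrK (submx_trans (submxMl _ _)).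
have : (ctr y <= (0 : 'M_n))%MS.
  by rewrite -(orthomx_ortho_disj H) sub_capmx s1 s2.
rewrite submx0 => /eqP hy.
have ey : ctr y = ctr x *m V1 by rewrite /y ctrM ctrK.
have : ctr x = 0 by rewrite -[ctr x]mulmx1 -(unitary_r uV) mulmxA -ey hy mul0mx.
by move=> h; rewrite -[x]ctrK h ctr0.
Qed.

End P5.


Local Notation "B ^!" :=
  (orthomx conjC (mx_of_hermitian (hermitian1mx _)) B) : matrix_set_scope.

Unset Implicit Arguments.
Set Strict Implicit.
Lemma oppE (C : numClosedFieldType) m n (A : 'M[C]_(m, n)) i j : (- A) i j = - A i j.
Proof. by rewrite mxE. Qed.

Theorem lemma4p1 (C : numClosedFieldType) (n : nat) (H S : 'M[C]_n) :
  psdmx H -> H != 0 -> skewhermmx S -> S != 0 ->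
  exists (U : 'M[C]_n) (r' : nat) (nb : 'I_r'.+2 -> nat)
         (hs : (\sum_(i < r'.+2) nb i)%N = n),
    U \is unitarymx /\
        (forall i j : 'I_r'.+2, (i <= j)%N -> (j < r'.+1)%N -> (nb j <= nb i)%N) /\
        (forall i : 'I_r'.+2, (i < r'.+1)%N -> (0 < nb i)%N) /\
        (forall i j : 'I_r'.+2, (i, j) != (ord0, ord0) ->
            blk hs (ctr U *m H *m U) i j = 0) /\
        pdmx (blk hs (ctr U *m H *m U) ord0 ord0) /\
        (forall i j : 'I_r'.+2, (j.+1 < i)%N \/ (i.+1 < j)%N ->
            blk hs (ctr U *m S *m U) i j = 0) /\
        (forall i : 'I_r'.+2, (i < r'.+1)%N ->
            blk hs (ctr U *m S *m U) i ord_max = 0 /\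
            blk hs (ctr U *m S *m U) ord_max i = 0) /\
        (forall i : 'I_r'.+2, skewhermmx (blk hs (ctr U *m S *m U) i i)) /\
        (forall i j : 'I_r'.+2, i = j.+1 :> nat -> (i < r'.+1)%N ->
            blk hs (ctr U *m S *m U) i j = - ctr (blk hs (ctr U *m S *m U) j i) /\
            exists (k : nat) (e : nb j = (nb i + k)%N) (Sig : 'M[C]_(nb i)),
              Sig \in unitmx /\
              castmx (erefl (nb i), e) (blk hs (ctr U *m S *m U) i j)
                = row_mx Sig (0 : 'M[C]_(nb i, k))).
Proof.
move=> psdH Hn0 skS _.
have hH := psdH.1.
set k := \rank H.
have k0 : (0 < k)%N by rewrite lt0n mxrank_eq0 Hn0.
set m := \rank (H^!)%MS.
have e : (k + m)%N = n by exact: add_rank_ortho.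
pose V := schmidt_complete H.
have uV : V \is unitarymx by exact: schmidt_complete_unitarymx.
pose V1 := schmidt (row_base H); pose V2 := schmidt (row_base (H^!)%MS).
have uV1 : V1 \is unitarymx by apply: schmidt_unitarymx; rewrite rank_leq_col.
have sV1 : (V1 <= H)%MS by rewrite (eqmx_schmidt_free (row_base_free _)) eq_row_base.
have hV2 : V2 *m H = 0 by have := ortho_part H; rewrite hH.
pose Vs := castmx (erefl (k + m)%N, esym e) V.
have uVs : Vs \is unitarymx by apply: unitary_cast.
pose S0 := Vs *m castmx (esym e, esym e) S *m ctr Vs.
pose H0 := Vs *m castmx (esym e, esym e) H *m ctr Vs.
have hH0 : H0 = block_mx (V1 *m H *m ctr V1) 0 0 0.
  rewrite /H0 /Vs ctr_cast cast_mul cast_mul castmx_id.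
  rewrite /V /schmidt_complete -/V1 -/V2 mul_col_mx hV2 ctrE tr_col_mx map_row_mx -!ctrE.
  have hHV2 : H *m ctr V2 = 0 by have := congr1 (@ctr _ _ _) hV2; rewrite ctrM hH ctr0.
  rewrite mul_col_row mul0mx -[V1 *m H *m ctr V2]mulmxA hHV2 mulmx0. by congr block_mx; rewrite mul0mx.
have skS0 : ctr S0 = - S0.
  rewrite /S0 !ctrM ctrK ctr_cast skS castN. by rewrite mulNmx mulmxN mulmxA.
have [Q [W [t [l [uQ uW sa su St]]]]] := @Rstep _ m k S0 k0 skS0.
pose U1 := block_mx Q 0 0 W.
pose U := castmx (e, e) (ctr Vs *m U1).
pose MS := ctr U1 *m S0 *m U1.
pose MH := ctr U1 *m H0 *m U1.
have hUS : ctr U *m S *m U = castmx (e, e) MS.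
  by rewrite /U conj_cast /MS /S0 ctrM ctrK !mulmxA.
have hUH : ctr U *m H *m U = castmx (e, e) MH.
  by rewrite /U conj_cast /MH /H0 ctrM ctrK !mulmxA.
have hMH : MH = block_mx (ctr Q *m (V1 *m H *m ctr V1) *m Q) 0 0 0.
  rewrite /MH hH0 /U1 ctr_block !ctr0 !mulmx_block !mulmx0 !mul0mx.
  by congr block_mx; rewrite ?addr0 ?add0r ?mulmx0 ?mul0mx.
have skMS : ctr MS = - MS.
  by rewrite /MS ctrM ctrM ctrK skS0 mulNmx mulmxN mulmxA.
set s := k :: t.
have hs : (\sum_(i < (size s).+1) nth l s i)%N = n.
  by rewrite sum_all su.
case: St => Z L Sg.
move: sa => /andP[so al].
have noninc : forall i j, (i <= j)%N -> (j < size s)%N -> (nth l s j <= nth l s i)%N.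
  move=> i j hij hj.
  have := @sorted_leq_nth _ geq (fun y x z h1 h2 => leq_trans h2 h1) leqnn l s so i j.
  by apply => //; rewrite inE //; apply: leq_ltn_trans hj.
exists U, (size t), (fun i => nth l s i), hs.
split; first by apply: unitary_cast; apply: unitary_mul; [exact: unitary_ctr | exact: unitary_block].
split; first by move=> i j hij hj; apply: noninc.
split; first by move=> i hi; apply/(all_nthP l al).
split.
  move=> i j hij; apply/matrixP => a b.
  rewrite blk_off mxE hUH ent_cast hMH ent_block.
  case: ifP => hx; case: ifP => hy; rewrite ?ent0 //.
  exfalso.
  have i0 : (i : nat) = 0%N.
    case: (ltnP 0 i) => ip; last by lia.
    by have := @off_ge k t i ip; rewrite -/s => h; move: hx; rewrite ltnNge (leq_trans h (leq_addr _ _)).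
  have j0 : (j : nat) = 0%N.
    case: (ltnP 0 j) => jp; last by lia.
    by have := @off_ge k t j jp; rewrite -/s => h; move: hy; rewrite ltnNge (leq_trans h (leq_addr _ _)).
  have ei : i = ord0 by apply/val_inj.
  have ej : j = ord0 by apply/val_inj.
  by move: hij; rewrite ei ej eqxx.
split.
  have -> : blk hs (ctr U *m H *m U) ord0 ord0 = ctr Q *m (V1 *m H *m ctr V1) *m Q.
    apply/matrixP => a b.
    rewrite blk_off hUH ent_cast hMH ent_block /off /= !add0n !ltn_ord entE //.
  by apply: pd_conj => //; exact: pd_restrict.
split.
  move=> i j [h|h]; apply/matrixP => a b; rewrite blk_off mxE hUS ent_cast.
    by apply: (Z i j) => //; [rewrite -ltnS; exact: ltn_ord | exact: inb_blk | exact: inb_blk].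
  rewrite skew_ent // (Z j i) ?conjC0 ?oppr0 //; [rewrite -ltnS; exact: ltn_ord | exact: inb_blk | exact: inb_blk].
split.
  move=> i hi; split; apply/matrixP => a b; rewrite blk_off mxE hUS ent_cast.
    by rewrite skew_ent // (L i) ?conjC0 ?oppr0 //; [exact: (inb_blk (i := ord_max)) | exact: inb_blk].
  by rewrite (L i) //; [exact: (inb_blk (i := ord_max)) | exact: inb_blk].
split.
  move=> i; apply/matrixP => a b.
  by rewrite /skewhermmx ctr_entry oppE !blk_off hUS !ent_cast (skew_ent (off s i + a)) // opprK.
move=> i j hij hi; split.
  apply/matrixP => a b.
  by rewrite oppE ctr_entry !blk_off hUS !ent_cast (skew_ent (off s i + a)).
have hle : (nth l s i <= nth l s j)%N by apply: noninc => //; lia.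
exists (nth l s j - nth l s i)%N, (esym (subnKC hle)).
exists (\matrix_(a < nth l s i, c < nth l s i) ent MS (off s i + a) (off s j + c)).
have hj : (j.+1 < size s)%N by rewrite -hij.
have [Sa Sb] := Sg j hj.
split.
  have gen : forall x, x = j.+1 ->
      (\matrix_(a < nth l s x, c < nth l s x) ent MS (off s x + a) (off s j + c)) \in unitmx.
    by move=> x ->.
  exact: gen.
apply/matrixP => a c; rewrite castmxE /= blk_off hUS ent_cast.
have [c' hc|c' hc] := splitP c.
  have -> : c = lshift _ c' by apply: val_inj.
  by rewrite row_mxEl mxE.
have -> : c = rshift _ c' by apply: val_inj.
rewrite row_mxEr mxE /=; apply: Sa.
- by rewrite /inb -hij leq_addr ltn_add2l ltn_ord.
- by rewrite -hij leq_add2l leq_addr.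
- by rewrite ltn_add2l -ltn_subRL ltn_ord.
Qed.
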